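(* Let $N=(S,T,F,M_0,\ell)$ and $N'=(S',T',F',M'_0,\ell')$ be two Petri nets, $N'$ being plain. Suppose there is a relation $\mathcal B\subseteq(\mathbb N^S\times\mathbb N^T)\times(\mathbb N^{S'}\times\mathbb N^{T'})$ such that (a) $(M_0,\emptyset)\mathcal B(M'_0,\emptyset)$; (b) if $(M_1,U_1)\mathcal B(M_1',U_1')$ and $(M_1,U_1)\xrightarrow{\tau}(M_2,U_2)$ then $(M_2,U_2)\mathcal B(M_1',U_1')$; (c) if $(M_1,U_1)\mathcal B(M_1',U_1')$ and $(M_1,U_1)\xrightarrow{\eta}(M_2,U_2)$ for some $\eta\in\mathrm{Act}^\pm$ then there is $(M_2',U_2')$ with $(M_1',U_1')\xrightarrow{\eta}(M_2',U_2')$ and $(M_2,U_2)\mathcal B(M_2',U_2')$; (d) if $(M_1,U_1)\mathcal B(M_1',U_1')$ and $(M_1',U_1')\xrightarrow{\eta}$ with $\eta\in\mathrm{Act}^\pm$ then $(M_1,U_1)\xrightarrow{\eta}$ or $(M_1,U_1)\xrightarrow{\tau}$; (e) there is no infinite sequence $(M,U)\xrightarrow{\tau}(M_1,U_1)\xrightarrow{\tau}(M_2,U_2)\xrightarrow{\tau}\cdots$ with $(M,U)\mathcal B(M',U')$ for some $(M',U')$. Then $\mathcal B$ is a branching split bisimulation with explicit divergence, and $N\approx^\Delta_{bSTb}N'$.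
   Context: Fix visible actions $\mathrm{Act}$ and $\tau\notin\mathrm{Act}$. A Petri net $(S,T,F,M_0,\ell)$ has disjoint $S,T$, $F:(S\times T)\cup(T\times S)\to\mathbb N$, $M_0\in\mathbb N^S$, $\ell:T\to\mathrm{Act}\cup\{\tau\}$; ${}^\bullet t(s)=F(s,t)$, $t^\bullet(s)=F(t,s)$; $M[t\rangle M'$ iff ${}^\bullet t\le M$ and $M'=M-{}^\bullet t+t^\bullet$. Plain: $\ell$ injective and never $\tau$. Split markings are pairs $(M,U)\in\mathbb N^S\times\mathbb N^T$ with transitions labelled in $\mathrm{Act}^\pm=\{a^+,a^-\mid a\in\mathrm{Act}\}$ or $\tau$: $(M,U)\xrightarrow{a^+}(M-{}^\bullet t,U+\{t\})$ iff $\ell(t)=a$ and $M[t\rangle$; $(M,U)\xrightarrow{a^-}(M+t^\bullet,U-\{t\})$ iff $t\in U$ and $\ell(t)=a$; $(M,U)\xrightarrow{\tau}(M',U)$ iff $M[t\rangle M'$ for some $t$ with $\ell(t)=\tau$. The split LTS of a net has initial state $(M_0,\emptyset)$. A branching split bisimulation with explicit divergence is a relation $\mathcal B$ between split markings of the two nets relating the initial ones such that: if $\mathfrak M_1\mathcal B\mathfrak M_2$ and $\mathfrak M_1\xrightarrow{\alpha}\mathfrak M_1'$ then $\mathfrak M_2\Rightarrow\mathfrak M_2^\dagger\xrightarrow{(\alpha)}\mathfrak M_2'$ with $\mathfrak M_1\mathcal B\mathfrak M_2^\dagger$, $\mathfrak M_1'\mathcal B\mathfrak M_2'$ ($\Rightarrow$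 reflexive transitive closure of $\xrightarrow{\tau}$; $\xrightarrow{(\alpha)}$ is $\xrightarrow{\alpha}$ or, if $\alpha=\tau$, equality), and symmetrically; and if $\mathfrak M_1\mathcal B\mathfrak M_2$ and an infinite $\tau$-sequence from $\mathfrak M_1$ has all states related to $\mathfrak M_2$ then there is an infinite $\tau$-sequence from $\mathfrak M_2$ with all pairs of states related, and symmetrically. $N\approx^\Delta_{bSTb}N'$ is defined likewise on ST-markings $(M,U)\in\mathbb N^S\times T^*$ with initial state $(M_0,\varepsilon)$ and transitions $(M,U)\xrightarrow{a^+}(M-{}^\bullet t,Ut)$ iff $\ell(t)=a\in\mathrm{Act}$ and $M[t\rangle$; $(M,U)\xrightarrow{a^{-n}}(M+t^\bullet,U^{-n})$ iff the $n$-th element $t$ of $U$ has label $a$ ($U^{-n}$: with it removed); $(M,U)\xrightarrow{\tau}(M',U)$ iff $M[t\rangle M'$ with $\ell(t)=\tau$. *)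

(* Defs.v *)
From Stdlib Require Import Relations.
From mathcomp Require Import all_boot.
Set Implicit Arguments. Unset Strict Implicit. Unset Printing Implicit Defensive.

Definition bb_transfer {L X Y : Type} (tau : L)
  (sx : X -> L -> X -> Prop) (sy : Y -> L -> Y -> Prop) (B : X -> Y -> Prop) :=
  forall x y a x', B x y -> sx x a x' ->
    exists y1 y', clos_refl_trans_1n Y (fun u v => sy u tau v) y y1 /\
      (sy y1 a y' \/ (a = tau /\ y' = y1)) /\ B x y1 /\ B x' y'.

Definition bb_div {L X Y : Type} (tau : L)
  (sx : X -> L -> X -> Prop) (sy : Y -> L -> Y -> Prop) (B : X -> Y -> Prop) :=
  forall x y (f : nat -> X), B x y -> f 0 = x ->
    (forall k, sx (f k) tau (f k.+1)) -> (forall k, B (f k) y) ->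
    exists g : nat -> Y, g 0 = y /\ (forall l, sy (g l) tau (g l.+1)) /\
      (forall k l, B (f k) (g l)).

Definition bbisim_div {L X Y : Type} (tau : L)
  (sx : X -> L -> X -> Prop) (sy : Y -> L -> Y -> Prop) (x0 : X) (y0 : Y)
  (B : X -> Y -> Prop) :=
  [/\ B x0 y0,
      bb_transfer tau sx sy B,
      bb_transfer tau sy sx (fun y x => B x y),
      bb_div tau sx sy B &
      bb_div tau sy sx (fun y x => B x y)].

(* A labelled Petri net over visible actions Act; label None stands for tau.
   pre t s = F(s,t), post t s = F(t,s). *)
Record net (Act : Type) := Net {
  place : Type;
  trans : eqType;
  pre : trans -> place -> nat;
  post : trans -> place -> nat;
  M0 : place -> nat;
  lab : trans -> option Act }.
Arguments M0 {Act} n _.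

Definition plain (Act : Type) (N : net Act) :=
  injective (@lab Act N) /\ forall t, @lab Act N t <> None.

Definition enabled Act (N : net Act) (M : place N -> nat) (t : trans N) :=
  forall s, pre t s <= M s.

Inductive slab (Act : Type) := SPlus of Act | SMinus of Act | STau.
Arguments STau {Act}.

Definition split_state Act (N : net Act) := ((place N -> nat) * (trans N -> nat))%type.

Inductive split_step Act (N : net Act) :
  split_state N -> slab Act -> split_state N -> Prop :=
| split_plus M U t a : lab t = Some a -> enabled M t ->
    split_step (M, U) (SPlus a)
      (fun s => M s - pre t s, fun u => U u + nat_of_bool (u == t))
| split_minus M U t a : 0 < U t -> lab t = Some a ->
    split_step (M, U) (SMinus a)
      (fun s => M s + post t s, fun u => U u - nat_of_bool (u == t))
| split_tau M U t : lab t = None -> enabled M t ->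
    split_step (M, U) STau (fun s => M s - pre t s + post t s, U).

Definition split_init Act (N : net Act) : split_state N := (M0 N, fun _ => 0).
Arguments split_init {Act} N.

Definition branching_split_bisim_div Act (N N' : net Act)
  (B : split_state N -> split_state N' -> Prop) :=
  bbisim_div STau (@split_step Act N) (@split_step Act N')
    (split_init N) (split_init N') B.

(* STMinus a n is a^{-n}, n counted from 1. *)
Inductive stlab (Act : Type) := STPlus of Act | STMinus of Act & nat | STTau.
Arguments STTau {Act}.

Definition st_state Act (N : net Act) := ((place N -> nat) * seq (trans N))%type.

Inductive st_step Act (N : net Act) :
  st_state N -> stlab Act -> st_state N -> Prop :=
| st_plus M U t a : lab t = Some a -> enabled M t ->
    st_step (M, U) (STPlus a) (fun s => M s - pre t s, rcons U t)
| st_minus M U1 t U2 a : lab t = Some a ->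
    st_step (M, U1 ++ t :: U2) (STMinus a (size U1).+1)
      (fun s => M s + post t s, U1 ++ U2)
| st_tau M U t : lab t = None -> enabled M t ->
    st_step (M, U) STTau (fun s => M s - pre t s + post t s, U).

Definition st_init Act (N : net Act) : st_state N := (M0 N, [::]).
Arguments st_init {Act} N.

Definition bSTb_equiv Act (N N' : net Act) :=
  exists B : st_state N -> st_state N' -> Prop,
    bbisim_div STTau (@st_step Act N) (@st_step Act N') (st_init N) (st_init N') B.

(* Main.v *)
Require Import Defs.
From mathcomp Require Import all_boot.
From Stdlib Require Import Relations FunctionalExtensionality ClassicalEpsilon Classical.
Set Implicit Arguments. Unset Strict Implicit.

Section S.
Variable Act : Type.
Variable N : net Act.

Lemma splus_inv M U a y2 : @split_step Act N (M,U) (SPlus a) y2 ->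
  exists t, lab t = Some a /\ enabled M t /\
   y2 = (fun s => M s - pre t s, fun u => U u + nat_of_bool (u == t)).
Proof. move=> H; inversion H; subst; eauto. Qed.

Lemma sminus_inv M U a y2 : @split_step Act N (M,U) (SMinus a) y2 ->
  exists t, 0 < U t /\ lab t = Some a /\
   y2 = (fun s => M s + post t s, fun u => U u - nat_of_bool (u == t)).
Proof. move=> H; inversion H; subst; eauto. Qed.

Lemma stau_inv M U y2 : @split_step Act N (M,U) STau y2 ->
  exists t, lab t = None /\ enabled M t /\
   y2 = (fun s => M s - pre t s + post t s, U).
Proof. move=> H; inversion H; subst; eauto. Qed.

Lemma sttau_inv M U y2 : @st_step Act N (M,U) STTau y2 ->
  exists t, lab t = None /\ enabled M t /\
   y2 = (fun s => M s - pre t s + post t s, U).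
Proof. move=> H; inversion H; subst; eauto. Qed.

Definition mset (U : seq (trans N)) : trans N -> nat := fun u => count_mem u U.

Lemma mset_rcons U t : mset (rcons U t) = fun u => mset U u + nat_of_bool (u == t).
Proof. apply: functional_extensionality => u; rewrite /mset -cats1 count_cat /= addn0 eq_sym. by []. Qed.

Lemma mset_rem U1 t U2 : mset (U1 ++ U2) = fun u => mset (U1 ++ t :: U2) u - nat_of_bool (u == t).
Proof. apply: functional_extensionality => u; rewrite /mset !count_cat /= eq_sym.
 by rewrite addnCA addKn. Qed.

Lemma mset_pos U1 t U2 : 0 < mset (U1 ++ t :: U2) t.
Proof. by rewrite /mset count_cat /= eqxx addnCA. Qed.

Lemma lift_tau p q : clos_refl_trans_1n _ (fun u v => @split_step Act N u STau v) p q ->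
  q.2 = p.2 /\ forall U, clos_refl_trans_1n _ (fun u v => @st_step Act N u STTau v) (p.1,U) (q.1,U).
Proof.
move=> H; induction H as [x|x y z Hxy _ [IH1 IH2]]; first by split=> // U; constructor.
case: x Hxy => M W Hxy; have [t [Ht [He E]]] := stau_inv Hxy; subst y.
split=> // U. eapply Relation_Operators.rt1n_trans; [ | exact (IH2 U)]. exact: st_tau.
Qed.
End S.
Arguments splus_inv {Act N M U a y2}.
Arguments sminus_inv {Act N M U a y2}.
Arguments stau_inv {Act N M U y2}.
Arguments sttau_inv {Act N M U y2}.

Lemma decomp (T T' O : Type) (f : T -> O) (g : T' -> O) (W1 : seq T') w W2 (V : seq T) :
  map f V = map g (W1 ++ w :: W2) -> exists V1 v V2, V = V1 ++ v :: V2 /\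
   size V1 = size W1 /\ f v = g w /\ map f V1 = map g W1 /\ map f V2 = map g W2.
Proof.
elim: W1 V => [|w1 W1 IH] [|v V] //= [E1 E2].
- by exists [::], v, V.
- have [V1 [v' [V2 [-> [Hs [Hv [H1 H2]]]]]]] := IH _ E2.
  by exists (v :: V1), v', V2; rewrite /= Hs E1 H1.
Qed.

Lemma det Act (N : net Act) : plain N -> forall (y : split_state N) e y1 y2,
  split_step y e y1 -> split_step y e y2 -> y1 = y2.
Proof.
move=> [inj nt] y e y1 y2 H1; case: H1 => [M U t a Ht He|M U t a Hp Ht|M U t Ht He] H2.
- have [t' [Ht' [_ ->]]] := splus_inv H2; have := inj _ _ (etrans Ht (esym Ht')); by move->.
- have [t' [_ [Ht' ->]]] := sminus_inv H2; have := inj _ _ (etrans Ht (esym Ht')); by move->.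
- have [t' [Ht' _]] := stau_inv H2; by case: (nt t').
Qed.

Lemma nplus Act (a : Act) : SPlus a <> STau. Proof. by []. Qed.
Lemma nminus Act (a : Act) : SMinus a <> STau. Proof. by []. Qed.

Lemma reach Act (N N' : net Act) (HN' : plain N')
  (B : split_state N -> split_state N' -> Prop) :
  (forall x y x2, B x y -> split_step x STau x2 -> B x2 y) ->
  (forall x y eta x2, eta <> STau -> B x y -> split_step x eta x2 ->
               exists y2, split_step y eta y2 /\ B x2 y2) ->
  (forall x y eta y2, eta <> STau -> B x y -> split_step y eta y2 ->
               (exists x2, split_step x eta x2) \/ (exists x2, split_step x STau x2)) ->
  ~ (exists (f : nat -> split_state N) (y : split_state N'),
               B (f 0) y /\ forall k, split_step (f k) STau (f k.+1)) ->
  forall x y eta y', eta <> STau -> B x y -> split_step y eta y' ->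
  exists x1 x2, clos_refl_trans_1n _ (fun u v => split_step u STau v) x x1 /\
    split_step x1 eta x2 /\ B x1 y /\ B x2 y'.
Proof.
move=> Hb Hc Hd He x y eta y' ne Bxy Hy; apply: NNPP => H.
pose R := fun x1 => clos_refl_trans _ (fun u v => @split_step Act N u STau v) x x1.
have BR : forall x1, R x1 -> B x1 y.
  have BP : forall p q, clos_refl_trans_1n _ (fun u v => @split_step Act N u STau v) p q -> B p y -> B q y.
    move=> p q Hpq; induction Hpq as [p|p p' q Hpp' _ IH]; first by [].
    by move=> Bp; apply: IH; apply: Hb Bp Hpp'.
  move=> x1 Rx; exact: (BP _ _ (clos_rt_rt1n _ _ _ _ Rx) Bxy).
have Hn : forall s : {x1 | R x1}, exists s' : {x1 | R x1}, split_step (sval s) STau (sval s').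
  case=> x1 Rx1 /=; case: (Hd _ _ _ _ ne (BR _ Rx1) Hy) => [[x2 Hx2]|[x2 Hx2]].
  - exfalso; apply: H; have [y2 [Hy2 Bx2]] := Hc _ _ _ _ ne (BR _ Rx1) Hx2.
    rewrite (det HN' Hy2 Hy) in Bx2.
    exists x1, x2; split; first exact: clos_rt_rt1n.
    by split=> //; split=> //; apply: BR.
  - exists (exist _ x2 (rt_trans _ _ _ _ _ Rx1 (rt_step _ _ _ _ Hx2))); exact: Hx2.
pose nx := fun s => proj1_sig (constructive_indefinite_description _ (Hn s)).
have Hnx : forall s, split_step (sval s) STau (sval (nx s)) :=
  fun s => proj2_sig (constructive_indefinite_description _ (Hn s)).
apply: He; exists (fun k => sval (iter k nx (exist _ x (rt_refl _ _ x)))), y.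
split=> //= k; exact: Hnx.
Qed.

Theorem lemma6p3 (Act : Type) (N N' : net Act) (HN' : plain N')
  (B : split_state N -> split_state N' -> Prop) :
  (* (a) *) B (split_init N) (split_init N') ->
  (* (b) *) (forall x y x2, B x y -> split_step x STau x2 -> B x2 y) ->
  (* (c) *) (forall x y eta x2, eta <> STau -> B x y -> split_step x eta x2 ->
               exists y2, split_step y eta y2 /\ B x2 y2) ->
  (* (d) *) (forall x y eta y2, eta <> STau -> B x y -> split_step y eta y2 ->
               (exists x2, split_step x eta x2) \/ (exists x2, split_step x STau x2)) ->
  (* (e) *) ~ (exists (f : nat -> split_state N) (y : split_state N'),
               B (f 0) y /\ forall k, split_step (f k) STau (f k.+1)) ->
  branching_split_bisim_div B /\ bSTb_equiv N N'.
Proof.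
move=> Ha Hb Hc Hd He.
have [inj nt] := HN'.
have Reach := reach HN' Hb Hc Hd He.
split.
  split.
  - exact: Ha.
  - move=> x y a x' Bxy Hs; case: (classic (a = STau)) => [Ea|ne].
    + subst a; exists y, y; split; first by constructor.
      by split; [right|split=> //; apply: Hb Hs].
    + have [y2 [Hy2 By2]] := Hc _ _ _ _ ne Bxy Hs.
      exists y, y2; split; first by constructor.
      by split; [left|].
  - move=> y x a y' Bxy Hs; case: (classic (a = STau)) => [Ea|ne].
    + subst a; exfalso; case: y Hs {Bxy} => M U /stau_inv [t [Ht _]]; by case: (nt t).
    + have [x1 [x2 [Hr [Hx2 [B1 B2]]]]] := Reach _ _ _ _ ne Bxy Hs.
      exists x1, x2; split=> //; split=> //; by left.
  - move=> x y f Bxy f0 Hf _; exfalso; apply: He; exists f, y; rewrite f0; by split.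
  - move=> y x g _ _ Hg _; exfalso; move: (Hg 0); case: (g 0) => M U.
    by move/stau_inv => [t [Ht _]]; case: (nt t).
exists (fun x y => B (x.1, mset x.2) (y.1, mset y.2) /\ map (@lab _ N) x.2 = map (@lab _ N') y.2).
split.
- by split=> //; exact: Ha.
- move=> [M U] [M' U'] a x' [BR LR] Hs; inversion Hs; subst;
    repeat match goal with H : lab _ = _ |- _ => revert H | H : enabled _ _ |- _ => revert H end;
    try (move=> Hen Hl); try move=> Hl; simpl in BR, LR.
  + have Sx := @split_plus _ N M (mset U) t a0 Hl Hen.
    have [y2 [Hy2 By2]] := Hc _ _ _ _ (@nplus _ a0) BR Sx.
    have [t' [Ht' [He' E]]] := splus_inv Hy2; subst y2.
    exists (M', U'), (fun s => M' s - pre t' s, rcons U' t').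
    split; first by constructor.
    split; first by left; apply: st_plus.
    split; first by split.
    split; first by rewrite /= !mset_rcons.
    by rewrite /= !map_rcons LR Hl Ht'.
  + have Sx := @split_minus _ N M (mset (U1 ++ t :: U2)) t a0 (mset_pos U1 t U2) Hl.
    have [y2 [Hy2 By2]] := Hc _ _ _ _ (@nminus _ a0) BR Sx.
    have [t' [Hp' [Ht' E]]] := sminus_inv Hy2; subst y2.
    have [V1 [v [V2 [EU [Hsz [Hv [H1 H2]]]]]]] := decomp (esym LR).
    have Evt : v = t' by apply: inj; rewrite Hv Hl Ht'.
    subst U' v.
    exists (M', V1 ++ t' :: V2), (fun s => M' s + post t' s, V1 ++ V2).
    split; first by constructor.
    split; first by left; rewrite -Hsz; apply: st_minus.
    split; first by split.
    split; first by rewrite /= (mset_rem U1 t U2) (mset_rem V1 t' V2).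
    by rewrite /= !map_cat H1 H2.
  + have Sx := @split_tau _ N M (mset U) t Hl Hen.
    exists (M', U'), (M', U'); split; first by constructor.
    split; first by right.
    split; first by split.
    by split=> //; apply: Hb Sx.
- move=> [M' U'] [M U] a y' [BR LR] Hs; inversion Hs; subst;
    repeat match goal with H : lab _ = _ |- _ => revert H | H : enabled _ _ |- _ => revert H end;
    try (move=> Hen Hl); try move=> Hl; simpl in BR, LR.
  + have Sy := @split_plus _ N' M' (mset U') t a0 Hl Hen.
    have [[M1 W1] [x2 [Hr [Hx2 [B1 B2]]]]] := Reach _ _ _ _ (@nplus _ a0) BR Sy.
    have [/= EW Hlift] := lift_tau Hr; subst W1.
    have [t0 [Ht0 [He0 E]]] := splus_inv Hx2; subst x2.
    exists (M1, U), (fun s => M1 s - pre t0 s, rcons U t0).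
    split; first exact: Hlift.
    split; first by left; apply: st_plus.
    split; first by split.
    split; first by rewrite /= !mset_rcons.
    by rewrite /= !map_rcons LR Hl Ht0.
  + have [V1 [v [V2 [EU [Hsz [Hv [H1 H2]]]]]]] := decomp LR.
    subst U.
    have Hlv : lab v = Some a0 by rewrite Hv Hl.
    have Sx := @split_minus _ N M (mset (V1 ++ v :: V2)) v a0 (mset_pos V1 v V2) Hlv.
    have [y2 [Hy2 By2]] := Hc _ _ _ _ (@nminus _ a0) BR Sx.
    have Sy := @split_minus _ N' M' (mset (U1 ++ t :: U2)) t a0 (mset_pos U1 t U2) Hl.
    rewrite (det HN' Hy2 Sy) in By2.
    exists (M, V1 ++ v :: V2), (fun s => M s + post v s, V1 ++ V2).
    split; first by constructor.
    split; first by left; rewrite -Hsz; apply: st_minus.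
    split; first by split.
    split; first by rewrite /= (mset_rem V1 v V2) (mset_rem U1 t U2).
    by rewrite /= !map_cat H1 H2.
  + by case: (nt t).
- move=> x y f Rxy f0 Hf _; exfalso; apply: He.
  exists (fun k => ((f k).1, mset (f k).2)), (y.1, mset y.2).
  split; first by rewrite f0; case: Rxy.
  move=> k; move: (Hf k); case: (f k) => M U.
  move/sttau_inv => [t [Ht [Hen ->]]]; exact: split_tau.
- move=> y x g _ _ Hg _; exfalso; move: (Hg 0); case: (g 0) => M U.
  by move/sttau_inv => [t [Ht _]]; case: (nt t).
Qed.
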